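(* Let $\mathcal M$ be a universally ex-post IC-IR single-item mechanism in an interdependent-values setting. Then under no-overbidding $\mathcal M$ is dominant-strategy incentive compatible: for every signal profile $\mathbf s$, every bid profile $\mathbf b$ with $\mathbf b\le\mathbf s$ coordinatewise, and every bidder $i$, $$\mathbb E\big[u_i((s_i,\mathbf b_{-i});\mathbf s)\big]\ge\mathbb E\big[u_i(\mathbf b;\mathbf s)\big],$$ where expectations are over the randomness of $\mathcal M$.
   Context: Single-item interdependent-values setting: bidders $i\in[n]$ have private signals $s_i\in S_i\subseteq\mathbb R_{\ge0}$ (intervals) and publicly known valuations $v_i:S_1\times\dots\times S_n\to\mathbb R_{\ge0}$, weakly increasing in every coordinate and strictly increasing in $s_i$. A deterministic mechanism $(x,p)$ solicits bids $b_i\in S_i$, outputs $x_i(\mathbf b)\in\{0,1\}$ with $\sum_ix_i(\mathbf b)\le1$ and payments $p_i(\mathbf b)$; utility $u_i(\mathbf b;\mathbf s)=x_i(\mathbf b)v_i(\mathbf s)-p_i(\mathbf b)$. It is ex-post IC-IR if for every $\mathbf s$, every $i$ and every $b_i\in S_i$: $x_i(\mathbf s)v_i(\mathbf s)-p_i(\mathbf s)\ge\max\{x_i(b_i,\mathbf s_{-i})v_i(\mathbf s)-p_i(b_i,\mathbf s_{-i}),0\}$. A randomized mechanism is universally ex-post IC-IR if it is a probability distribution over deterministic ex-post IC-IR mechanisms. *)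

(* Defs.v *)
From HB Require Import structures.
From mathcomp Require Import all_boot all_order all_algebra.
From mathcomp Require Import all_classical all_reals all_analysis.
Set Implicit Arguments. Unset Strict Implicit. Unset Printing Implicit Defensive.
Import Order.TTheory GRing.Theory Num.Theory.
Local Open Scope ring_scope.
Local Open Scope classical_set_scope.

Section Auction.
Variables (R : realType) (n : nat).

Definition profile := 'I_n -> R.

Definition upd (s : profile) (i : 'I_n) (c : R) : profile :=
  fun j => if j == i then c else s j.

Definition signal_spaces (S : 'I_n -> set R) : Prop :=
  forall i, is_interval (S i) /\ S i `<=` [set x | 0 <= x].

Definition in_prof (S : 'I_n -> set R) (s : profile) : Prop := forall i, S i (s i).

Definition valuations (S : 'I_n -> set R) (v : 'I_n -> profile -> R) : Prop :=
  forall i, forall s, in_prof S s ->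
    [/\ 0 <= v i s,
        (forall j c, S j c -> s j <= c -> v i s <= v i (upd s j c)) &
        (forall c, S i c -> s i < c -> v i s < v i (upd s i c))].

Record mechanism := Mechanism {
  alloc : 'I_n -> profile -> bool;
  pay : 'I_n -> profile -> R }.

Definition utility (v : 'I_n -> profile -> R) (M : mechanism)
  (i : 'I_n) (b s : profile) : R :=
  (alloc M i b)%:R * v i s - pay M i b.

Definition feasible (S : 'I_n -> set R) (M : mechanism) : Prop :=
  forall b, in_prof S b -> (\sum_(i < n) (alloc M i b : nat) <= 1)%N.

Definition expost_IC_IR (S : 'I_n -> set R) (v : 'I_n -> profile -> R)
  (M : mechanism) : Prop :=
  forall s, in_prof S s -> forall i bi, S i bi ->
    Num.max (utility v M i (upd s i bi) s) 0 <= utility v M i s s.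

End Auction.

(* Main.v *)
Require Import Defs.
From HB Require Import structures.
From mathcomp Require Import all_boot all_order all_algebra.
From mathcomp Require Import all_classical all_reals all_analysis.
From mathcomp Require Import lra.
Import Order.TTheory GRing.Theory Num.Theory.
Local Open Scope ring_scope.
Local Open Scope classical_set_scope.

Lemma v_mono (R : realType) (n : nat) (S : 'I_n -> set R)
  (v : 'I_n -> profile R n -> R) i (t u : profile R n) :
  valuations S v -> in_prof S t -> in_prof S u -> (forall j, t j <= u j) ->
  v i t <= v i u.
Proof.
move=> hv ht hu htu.
pose w (k : nat) : profile R n := fun j => if (j < k)%N then u j else t j.
have wP k : in_prof S (w k) by move=> j; rewrite /w; case: ifP.
have : forall k, v i t <= v i (w k).
  elim=> [|k IH].
    have -> : w 0%N = t by apply: funext => j; rewrite /w ltn0.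
    by [].
  apply: (le_trans IH).
  case: (ltnP k n) => hk.
    have -> : w k.+1 = upd (w k) (Ordinal hk) (u (Ordinal hk)).
      apply: funext => j; rewrite /w /upd ltnS leq_eqVlt.
      case: (j =P Ordinal hk) => [->|hne] /=; first by rewrite eqxx.
      have -> : (j == k :> nat) = false by apply/eqP => e; apply: hne; apply: val_inj.
      by [].
    have [_ h _] := hv i (w k) (wP k).
    apply: h; first exact: hu.
    by rewrite /w /= ltnn.
  have -> : w k.+1 = w k.
    apply: funext => j; rewrite /w.
    have h1 : (j < k.+1)%N by apply: leq_trans (ltn_ord j) _; apply: leq_trans hk _.
    have h2 : (j < k)%N by apply: leq_trans (ltn_ord j) hk.
    by rewrite h1 h2.
  by [].
move=> /(_ n).
have -> : w n = u by apply: funext => j; rewrite /w ltn_ord.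
by [].
Qed.

Lemma upd_id (R : realType) (n : nat) (b : profile R n) i : upd b i (b i) = b.
Proof. by apply: funext => j; rewrite /upd; case: eqP => [->|]. Qed.

Lemma upd_upd (R : realType) (n : nat) (b : profile R n) i c d :
  upd (upd b i c) i d = upd b i d.
Proof. by apply: funext => j; rewrite /upd; case: eqP. Qed.

Lemma pointwise (R : realType) (n : nat) (S : 'I_n -> set R)
  (v : 'I_n -> profile R n -> R) (m : mechanism R n) :
  valuations S v -> expost_IC_IR S v m ->
  forall (s b : profile R n), in_prof S s -> in_prof S b ->
  (forall j, b j <= s j) -> forall i,
  utility v m i b s <= utility v m i (upd b i (s i)) s.
Proof.
move=> hv hic s b hs hb hbs i.
set s' := upd b i (s i).
have hs' : in_prof S s' by move=> j; rewrite /s' /upd; case: eqP => [->|].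
have [e|ne] := eqVneq (b i) (s i).
  by rewrite /s' -e upd_id.
have lt : b i < s i by rewrite lt_neqAle ne hbs.
move: (hic s' hs' i (b i) (hb i)).
rewrite /s' upd_upd upd_id -/s' ge_max => /andP[h1 _].
move: (hic b hb i (s i) (hs i)).
rewrite -/s' ge_max => /andP[h2 _].
have vs : v i s' <= v i s.
  apply: (@v_mono R n S v i s' s hv hs' hs) => j; rewrite /s' /upd; case: eqP => [->|] //.
have vb : v i b < v i s'.
  have [_ _ h] := hv i b hb; exact: h.
move: h1 h2; rewrite /utility.
case: (alloc m i b); case: (alloc m i s') => /= h1 h2; lra.
Qed.

Theorem mainTheorem7 (R : realType) (n : nat) (S : 'I_n -> set R)
  (v : 'I_n -> profile R n -> R)
  (d : measure_display) (Omega : measurableType d)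
  (P : probability Omega R) (M : Omega -> mechanism R n) :
  signal_spaces S -> valuations S v ->
  (* universally ex-post IC-IR: a distribution over deterministic
     feasible ex-post IC-IR mechanisms *)
  (forall w, feasible S (M w) /\ expost_IC_IR S v (M w)) ->
  (* regularity so that the expectations are well defined *)
  (forall i b, P.-integrable setT (fun w => ((alloc (M w) i b)%:R : R)%:E)) ->
  (forall i b, P.-integrable setT (fun w => (pay (M w) i b)%:E)) ->
  forall (s b : profile R n), in_prof S s -> in_prof S b ->
  (forall j, b j <= s j) ->
  forall i : 'I_n,
    Rintegral P setT (fun w => utility v (M w) i b s)
    <= Rintegral P setT (fun w => utility v (M w) i (upd b i (s i)) s).
Proof.
move=> _ hv hM hx hp s b hs hb hbs i.
have hint : forall c, P.-integrable setT (EFin \o (fun w => utility v (M w) i c s)).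
  move=> c.
  have h : P.-integrable setT (fun w => ((v i s)%:E * ((alloc (M w) i c)%:R : R)%:E
                                        - (pay (M w) i c)%:E)%E).
    apply: (@integrableB _ _ _ P setT measurableT
      (fun w => ((v i s)%:E * ((alloc (M w) i c)%:R : R)%:E)%E)
      (fun w => (pay (M w) i c)%:E)); last exact: hp.
    exact: integrableZl.
  apply: eq_integrable h; first exact: measurableT.
  move=> w _ /=.
  by rewrite /utility EFinB EFinM muleC.
apply: le_Rintegral => // w _.
exact: (@pointwise R n S v (M w) hv (proj2 (hM w)) s b hs hb hbs i).
Qed.
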